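(* Let $\mathcal{A}$ be an $[n_a,k_a]_q$ cyclic code and let $\mathcal{B}$ be an $[n_b,n_b-1]_q$ single parity check code (minimum distance $d_b=2$), with $\gcd(n_a,n_b)=1$. Let $\alpha$ be an element of order $n_a$ in $\mathbb{F}_{q^{s_a}}$, $\beta$ an element of order $n_b$ in $\mathbb{F}_{q^{s_b}}$, $s=\mathrm{lcm}(s_a,s_b)$, and let $f_1,f_2,m_1,m_2,\delta,\nu$ be integers with $m_1\neq0$, $m_2\neq0$, $\gcd(n_a,m_1)=\gcd(n_b,m_2)=1$, $\delta\ge 2$, $\nu>0$, such that $$\sum_{i=0}^{\infty} a(\alpha^{f_1+im_1+j})\, b(\beta^{f_2+im_2+j})X^i\equiv 0 \bmod X^{\delta-1}\quad\text{for all } j=0,\dots,\nu$$ holds for all $a(X)\in\mathcal{A}$, $b(X)\in\mathcal{B}$. Let $b(X)\in\mathcal{B}$ be a codeword of weight $2$. Let $r(X)=a(X)+e(X)$ with $a(X)\in\mathcal{A}$ and error $e(X)=\sum_{i\in\mathsf{E}}e_iX^i\in\mathbb{F}_q[X]$, where $\mathsf{E}=\{j_1,\dots,j_t\}\subseteq\{0,\dots,n_a-1\}$, $|\mathsf{E}|=t$, $e_i\neq 0$ for $i\in\mathsf{E}$, and $$t\leq \frac{\delta+\nu-1}{2d_b}=\frac{\delta+\nu-1}{4}.$$ For $j=0,\dots,\nu$ define the syndromes $S^{(j)}_i = e(\alpha^{f_1+im_1+j})\, b(\beta^{f_2+im_2+j})\in\mathbb{F}_{q^s}$ for $i=0,\dots,\delta-2$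 (equivalently, the coefficients of $\sum_{i\ge0} r(\alpha^{f_1+im_1+j})b(\beta^{f_2+im_2+j})X^i \bmod X^{\delta-1}$), let $\mathbf{S}^{(j)}$ be the $(\delta-1-2t)\times 2t$ matrix whose entry in row $u$ and column $v$ ($u=0,\dots,\delta-2-2t$, $v=0,\dots,2t-1$) is $S^{(j)}_{u+v}$, and let $\mathbf{S}$ be the matrix obtained by stacking $\mathbf{S}^{(0)},\mathbf{S}^{(1)},\dots,\mathbf{S}^{(\nu)}$ vertically. Then $\operatorname{rank}(\mathbf{S})=2t$.
   Context: A cyclic $[n,k]_q$ code is an ideal of $\mathbb{F}_q[X]/(X^n-1)$; codewords are identified with polynomials of degree less than $n$, and $c(\gamma)$ denotes evaluation at $\gamma$ in an extension field. A single parity check code of length $n_b$ is the code of all vectors in $\mathbb{F}_q^{n_b}$ whose coordinates sum to zero. The matrix $\mathbf{S}$ is the coefficient matrix of the joint key equations $\Omega^{(j)}(X)\equiv\Lambda(X)S^{(j)}(X)\bmod X^{\delta-1}$ for an error-locator polynomial $\Lambda$ of degree $2t$. *)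

(* Defs.v *)
From HB Require Import structures.
From mathcomp Require Import all_boot all_order all_algebra all_field.
Set Implicit Arguments. Unset Strict Implicit. Unset Printing Implicit Defensive.
Import GRing.Theory Num.Theory.
Local Open Scope ring_scope.

(* A cyclic code of length n over F: an ideal of F[X]/(X^n - 1), codewords
   identified with polynomials of degree < n (i.e. size <= n). *)
Definition cyclic_code (F : fieldType) (n : nat) (C : {pred {poly F}}) : Prop :=
  [/\ forall c, c \in C -> (size c <= n)%N,
      0 \in C,
      forall c d, c \in C -> d \in C -> c + d \in C,
      forall (k : F) c, c \in C -> k *: c \in C &
      forall c, c \in C -> ('X * c) %% ('X^n - 1) \in C].

Definition spc_code (F : fieldType) (n : nat) : {pred {poly F}} :=
  [pred b : {poly F} | (size b <= n)%N && (\sum_(i < n) b`_i == 0)].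

Definition weight (F : fieldType) (p : {poly F}) : nat :=
  count (fun c => c != 0) (polyseq p).

Definition peval (F : fieldType) (L : fieldExtType F) (p : {poly F}) (x : L) : L :=
  (map_poly (in_alg L) p).[x].

Definition syndrome (F : fieldType) (L : fieldExtType F) (a b : {poly F})
  (alpha beta : L) (f1 m1 f2 m2 : int) (j i : nat) : L :=
  peval a (alpha ^ (f1 + i%:Z * m1 + j%:Z)) *
  peval b (beta ^ (f2 + i%:Z * m2 + j%:Z)).

(* Row index k of S corresponds to j = k / (delta-1-2t), u = k mod (delta-1-2t). *)
Definition syndrome_matrix (F : fieldType) (L : fieldExtType F) (e b : {poly F})
  (alpha beta : L) (f1 m1 f2 m2 : int) (delta nu t : nat)
  : 'M[L]_(nu.+1 * (delta.-1 - 2 * t), 2 * t) :=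
  \matrix_(k, v) syndrome e b alpha beta f1 m1 f2 m2
     (k %/ (delta.-1 - 2 * t))%N ((k %% (delta.-1 - 2 * t)) + v)%N.

(* Main.v *)
Require Import Defs.
From HB Require Import structures.
From mathcomp Require Import all_boot all_order all_algebra all_field zify ring.
Set Implicit Arguments. Unset Strict Implicit. Unset Printing Implicit Defensive.
Import GRing.Theory Num.Theory.
Local Open Scope ring_scope.

Section LA.
Variable L : fieldType.

Definition pw (N : nat) (h : 'rV[L]_N) (i : nat) : 'rV[L]_N := \row_k (h 0 k ^+ i).

Lemma pwS N (h : 'rV[L]_N) i : pw h i.+1 = pw h i *m diag_mx h.
Proof. by apply/rowP => k; rewrite mul_mx_diag !mxE exprSr. Qed.

Lemma vdm_unit N (h : 'rV[L]_N) : injective (fun k => h 0 k) ->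
  Vandermonde N h \in unitmx.
Proof.
move=> inj; rewrite unitmxE det_Vandermonde unitfE.
apply/prodf_neq0 => i _; apply/prodf_neq0 => j ij; rewrite subr_eq0.
by apply/eqP => /inj eij; move: ij; rewrite eij ltnn.
Qed.

Lemma growth N m1 m2 (W : 'M[L]_(m1, N)) (W' : 'M[L]_(m2, N)) (h : 'rV[L]_N) :
  injective (fun k => h 0 k) -> ((const_mx 1 : 'rV[L]_N) <= W)%MS -> (W <= W')%MS ->
  (W *m diag_mx h <= W')%MS -> (minn N (\rank W).+1 <= \rank W')%N.
Proof.
move=> inj one sWW' sWh.
case: (boolP (W' <= W)%MS) => sW'W.
  have WhW : (W *m diag_mx h <= W)%MS by apply: submx_trans sWh sW'W.
  have pwW : forall i, (pw h i <= W)%MS.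
    elim=> [|i IH].
      suff -> : pw h 0 = const_mx 1 by [].
      by apply/rowP=> k; rewrite !mxE expr0.
    by rewrite pwS; apply: submx_trans WhW; apply: submxMr.
  have VW : (Vandermonde N h <= W)%MS.
    apply/row_subP => i.
    suff -> : row i (Vandermonde N h) = pw h i by [].
    by apply/rowP => k; rewrite !mxE.
  have := mxrankS VW; rewrite mxrank_unit ?vdm_unit // => hN.
  apply: leq_trans (geq_minl _ _) _; apply: leq_trans hN (mxrankS sWW').
have lt : (W < W')%MS by rewrite ltmxE sWW' sW'W.
rewrite ltmxErank in lt; case/andP: lt => _ lt.
exact: leq_trans (geq_minr _ _) lt.
Qed.

End LA.


Section Roos.
Variable L : fieldType.
Variables (N : nat) (z g : 'rV[L]_N).
Hypothesis zinj : injective (fun k => z 0 k).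
Hypothesis ginj : injective (fun k => g 0 k).

Definition X j u : 'rV[L]_N := \row_k (z 0 k ^+ j * g 0 k ^+ u).
Definition T a d : 'M[L]_N := (\sum_(j < a.+1) \sum_(u < d.+1) <<X j u>>)%MS.

Lemma XT a d j u : (j <= a)%N -> (u <= d)%N -> (X j u <= T a d)%MS.
Proof.
move=> ja ud; apply: (sumsmx_sup (Ordinal (ja : j < a.+1)%N)) => //.
apply: (sumsmx_sup (Ordinal (ud : u < d.+1)%N)) => //; by rewrite genmxE.
Qed.

Lemma TS a d m (M : 'M[L]_(m, N)) :
  (forall j u, (j <= a)%N -> (u <= d)%N -> (X j u <= M)%MS) -> (T a d <= M)%MS.
Proof.
move=> H; apply/sumsmx_subP => j _; apply/sumsmx_subP => u _.
by rewrite genmxE; apply: H; rewrite -ltnS.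
Qed.

Lemma Xg j u : X j u *m diag_mx g = X j u.+1.
Proof. by apply/rowP => k; rewrite mul_mx_diag !mxE exprSr mulrA. Qed.
Lemma Xz j u : X j u *m diag_mx z = X j.+1 u.
Proof. by apply/rowP => k; rewrite mul_mx_diag !mxE exprSr; rewrite mulrAC. Qed.

Lemma TMr a d (G : 'M[L]_N) m (M : 'M[L]_(m, N)) :
  (forall j u, (j <= a)%N -> (u <= d)%N -> (X j u *m G <= M)%MS) -> (T a d *m G <= M)%MS.
Proof.
move=> H; rewrite sumsmxMr; apply/sumsmx_subP => j _.
rewrite sumsmxMr; apply/sumsmx_subP => u _.
by rewrite (eqmxMr _ (genmxE _)); apply: H; rewrite -ltnS.
Qed.

Lemma oneT a d : ((const_mx 1 : 'rV[L]_N) <= T a d)%MS.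
Proof.
suff -> : (const_mx 1 : 'rV[L]_N) = X 0 0 by apply: XT.
by apply/rowP => k; rewrite !mxE !expr0 mulr1.
Qed.

Lemma rankT a d : (0 < N)%N -> (minn N (a + d).+1 <= \rank (T a d))%N.
Proof.
move=> N0; elim: d => [|d IH].
  elim: a => [|a IH].
    have : (X 0 0 <= T 0 0)%MS by apply: XT.
    move/mxrankS; rewrite rank_rV.
    have -> : X 0 0 != 0.
      apply/eqP => /rowP /(_ (Ordinal N0)); rewrite !mxE !expr0 mulr1 => /eqP.
      by rewrite oner_eq0.
    move=> h; apply: leq_trans h; exact: geq_minr.
  have := @growth L N _ _ (T a 0) (T a.+1 0) z zinj (oneT _ _).
  have s1 : (T a 0 <= T a.+1 0)%MS by apply: TS => j u ja ud; apply: XT => //; apply: leqW.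
  have s2 : (T a 0 *m diag_mx z <= T a.+1 0)%MS by apply: TMr => j u ja ud; rewrite Xz; apply: XT.
  move=> /(_ s1 s2) h; apply: leq_trans h; move: IH; rewrite !addn0; lia.
have := @growth L N _ _ (T a d) (T a d.+1) g ginj (oneT _ _).
have s1 : (T a d <= T a d.+1)%MS by apply: TS => j u ja ud; apply: XT => //; apply: leqW.
have s2 : (T a d *m diag_mx g <= T a d.+1)%MS by apply: TMr => j u ja ud; rewrite Xg; apply: XT.
move=> /(_ s1 s2) h; apply: leq_trans h; move: IH; lia.
Qed.

Lemma roos_rank nu D (c : 'rV[L]_N) : (forall k, c 0 k != 0) -> (0 < D)%N -> (N <= nu + D)%N ->
  \rank (\matrix_(r < nu.+1 * D, v < N)
     \sum_(k < N) c 0 k * g 0 k ^+ (r %% D + v) * z 0 k ^+ (r %/ D)) = N.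
Proof.
move=> c0 D0 ND.
pose U := \matrix_(r < nu.+1 * D, k < N) (z 0 k ^+ (r %/ D) * g 0 k ^+ (r %% D)).
pose B := diag_mx c *m (Vandermonde N g)^T.
have -> : \matrix_(r < nu.+1 * D, v < N)
     \sum_(k < N) c 0 k * g 0 k ^+ (r %% D + v) * z 0 k ^+ (r %/ D) = U *m B.
  apply/matrixP => r v; rewrite !mxE; apply: eq_bigr => k _.
  rewrite /B mul_diag_mx !mxE exprD; ring.
have Bu : B \in unitmx.
  rewrite /B unitmx_mul unitmx_tr vdm_unit // andbT unitmxE det_diag unitfE.
  by apply/prodf_neq0 => k _.
rewrite mxrankMfree ?row_free_unit //.
apply/eqP; rewrite eqn_leq rank_leq_col /=.
case: (posnP N) => N0.
  by have := leq0n (\rank U); rewrite -{1}N0.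
have sTU : (T nu D.-1 <= U)%MS.
  apply: TS => j u ja ud.
  have hr : (j * D + u < nu.+1 * D)%N by move: ja ud D0; nia.
  suff -> : X j u = row (Ordinal hr) U by apply: row_sub.
  apply/rowP => k; rewrite !mxE /=.
  have hu : (u < D)%N by move: ud D0; lia.
  rewrite divnMDl // modnMDl divn_small // modn_small // addn0 //.
apply: leq_trans (mxrankS sTU).
apply: leq_trans (rankT nu D.-1 N0).
move: ND D0; lia.
Qed.
End Roos.
Lemma card_count (F : fieldType) (b : {poly F}) n : (size b <= n)%N ->
  #|[set i : 'I_n | b`_i != 0]| = count (fun c => c != 0) (polyseq b).
Proof.
move=> sb.
have -> : #|[set i : 'I_n | b`_i != 0]| = count (fun i : 'I_n => b`_i != 0) (enum 'I_n).
  rewrite cardsE cardE /enum_mem size_filter.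
  by rewrite (@eq_filter _ _ predT) ?filter_predT //; apply: eq_count.
rewrite -(count_map val (fun x => b`_x != 0)) val_enum_ord.
rewrite -(subnKC sb) iotaD count_cat add0n.
have -> : count (fun x => b`_x != 0) (iota (size b) (n - size b)) = 0%N.
  apply/eqP; rewrite -leqn0 leqNgt -has_count; apply/hasPn => x.
  by rewrite mem_iota => /andP[h _]; rewrite nth_default // eqxx.
rewrite addn0 -(count_map (nth 0 b) (fun c => c != 0)).
by rewrite -/(mkseq _ _) mkseq_nth.
Qed.

Lemma peval_sum (F : fieldType) (L : fieldExtType F) (p : {poly F}) n (S : {set 'I_n}) (x : L) :
  (size p <= n)%N -> (forall i : 'I_n, i \notin S -> p`_i = 0) ->
  peval p x = \sum_(i in S) (p`_i)%:A * x ^+ i.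
Proof.
move=> sp hS; rewrite /peval (horner_coef_wide _ (n:=n)); last by rewrite size_map_poly.
rewrite (bigID (mem S)) /= [X in _ + X]big1 ?addr0.
  by apply: eq_bigr => i _; rewrite coef_map.
by move=> i /hS; rewrite coef_map /= => ->; rewrite scale0r mul0r.
Qed.

Lemma powsplit (L : fieldType) (a : L) (f m : int) (i j l : nat) : a != 0 ->
  (a ^ (f + i%:Z * m + j%:Z)) ^+ l = (a ^ f) ^+ l * ((a ^ m) ^+ l) ^+ i * (a ^+ l) ^+ j.
Proof.
move=> a0; have ua : a \is a GRing.unit by rewrite unitfE.
rewrite !exprzDr //.
rewrite (mulrC (i%:Z)) -exprz_exp.

rewrite -!exprnP !exprMn -!exprM.
by rewrite (mulnC l i) (mulnC l j) !exprM.
Qed.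

Lemma prim_neq0 (L : fieldType) n (a : L) : n.-primitive_root a -> a != 0.
Proof.
move=> pa; apply/eqP => a0; have := prim_expr_order pa.
by rewrite a0 expr0n gtn_eqF ?(prim_order_gt0 pa) // => /eqP; rewrite eq_sym oner_eq0.
Qed.

Lemma inj2 (L : fieldType) (a b : L) na nb l l' s s' :
  na.-primitive_root a -> nb.-primitive_root b -> coprime na nb ->
  (l < na)%N -> (l' < na)%N -> (s < nb)%N -> (s' < nb)%N ->
  a ^+ l * b ^+ s = a ^+ l' * b ^+ s' -> l = l' /\ s = s'.
Proof.
move=> pa pb co hl hl' hs hs' E.
have nb0 := prim_order_gt0 pb.
case: (egcdnP na nb0) => km kn hk _.
rewrite gcdnC (eqP co) in hk.
set u := (km * nb)%N.
have au : a ^+ u = a.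
  by rewrite -(prim_expr_mod pa) /u hk modnMDl (prim_expr_mod pa) expr1.
have bu : b ^+ u = 1 by rewrite /u mulnC exprM (prim_expr_order pb) expr1n.
have : (a ^+ l * b ^+ s) ^+ u = (a ^+ l' * b ^+ s') ^+ u by rewrite E.
clearbody u.
rewrite !exprMn -!exprM !(mulnC _ u) !exprM au bu !expr1n !mulr1 => E1.
have ll : l = l'.
  have := eq_prim_root_expr pa l l'; rewrite E1 eqxx !modn_small //.
  by move/esym/eqP.
split => //; move: E; rewrite ll => /mulfI E2.
have := eq_prim_root_expr pb s s'; rewrite E2 ?eqxx ?expf_neq0 ?(prim_neq0 pa) //.
by rewrite !modn_small // => /esym/eqP.
Qed.

Lemma primz (L : fieldType) n (a : L) (m : int) :
  n.-primitive_root a -> coprime n `|m|%N -> n.-primitive_root (a ^ m).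
Proof.
move=> pa; have n0 := prim_order_gt0 pa.
case: m => k /= co.
  by rewrite -exprnP prim_root_exp_coprime // coprime_sym.
have -> : a ^ (Negz k) = a ^+ (k.+1 * n.-1).
  rewrite NegzE -exprz_inv -exprnP exprVn; apply: mulr1_eq.
  by rewrite -exprD addnC -mulnSr prednK // mulnC exprM (prim_expr_order pa) expr1n.
by rewrite prim_root_exp_coprime // coprimeMl coprime_sym co coprimePn.
Qed.

Lemma sum_cast (L : fieldType) m n (e : m = n) (G : 'I_n -> L) :
  \sum_(i < n) G i = \sum_(k < m) G (cast_ord e k).
Proof. by case: n / e G => G; apply: eq_bigr => k _; rewrite cast_ord_id. Qed.

Lemma pair_eq (na nb : nat) (x y : 'I_na * 'I_nb) :
  val x.1 = val y.1 -> val x.2 = val y.2 -> x = y.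
Proof. by case: x y => [x1 x2] [y1 y2] /= /val_inj -> /val_inj ->. Qed.

Unset Implicit Arguments.
Theorem theorem7 (F : finFieldType) (L : fieldExtType F)
  (na nb : nat) (A : {pred {poly F}}) (alpha beta : L)
  (f1 f2 m1 m2 : int) (delta nu : nat)
  (b a e r : {poly F}) (E : {set 'I_na}) :
  cyclic_code na A ->
  coprime na nb ->
  na.-primitive_root alpha -> nb.-primitive_root beta ->
  m1 != 0 -> m2 != 0 ->
  coprime na `|m1|%N -> coprime nb `|m2|%N ->
  (2 <= delta)%N -> (0 < nu)%N ->
  (forall a' b', a' \in A -> b' \in @spc_code F nb ->
     forall j i, (j <= nu)%N -> (i < delta.-1)%N ->
       syndrome a' b' alpha beta f1 m1 f2 m2 j i = 0) ->
  b \in @spc_code F nb -> weight b = 2%N ->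
  a \in A -> r = a + e ->
  (size e <= na)%N ->
  (forall i : 'I_na, (i \in E) = (e`_i != 0)) ->
  (4 * #|E| <= delta + nu - 1)%N ->
  (2 * #|E| < delta.-1)%N ->
  \rank (syndrome_matrix e b alpha beta f1 m1 f2 m2 delta nu #|E|) = (2 * #|E|)%N.
Proof.
move=> _ co pa pb _ _ cm1 cm2 d2 nu0 _ bspc wb _ _ se hE h4 h2.
have sb : (size b <= nb)%N by case/andP: bspc.
pose P := [set i : 'I_nb | b`_i != 0].
have hP : #|P| = 2%N by rewrite card_count.
pose Q := setX E P.
have hQ : (2 * #|E| = #|Q|)%N by rewrite cardsX hP mulnC.
pose pt (k : 'I_(2 * #|E|)) : 'I_na * 'I_nb := enum_val (cast_ord hQ k).
have ptQ k : pt k \in Q by apply: enum_valP.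
have pt_inj : injective pt by move=> k k' /enum_val_inj /cast_ord_inj.
have a0 := prim_neq0 pa; have b0 := prim_neq0 pb.
pose zf (x : 'I_na * 'I_nb) := alpha ^+ x.1 * beta ^+ x.2.
pose gf (x : 'I_na * 'I_nb) := (alpha ^ m1) ^+ x.1 * (beta ^ m2) ^+ x.2.
pose cf (x : 'I_na * 'I_nb) := (e`_x.1)%:A * (b`_x.2)%:A * (alpha ^ f1) ^+ x.1 * (beta ^ f2) ^+ x.2 : L.
pose z := \row_k zf (pt k). pose g := \row_k gf (pt k). pose c := \row_k cf (pt k).
have key j i : syndrome e b alpha beta f1 m1 f2 m2 j i =
    \sum_(k < 2 * #|E|) c 0 k * g 0 k ^+ i * z 0 k ^+ j.
  rewrite /syndrome (peval_sum (S:=E)) //; last first.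
    by move=> l; rewrite hE => /negbNE /eqP.
  rewrite (peval_sum (S:=P)) //; last first.
    by move=> s; rewrite inE => /negbNE /eqP.
  rewrite big_distrl /=; under eq_bigr do rewrite big_distrr /=.
  rewrite pair_big_dep /=.
  rewrite (eq_bigl (fun x => x \in Q)); last by case=> x1 x2; rewrite in_setX.
  rewrite big_enum_val (sum_cast hQ); apply: eq_bigr => k _.
  rewrite !mxE /cf /gf /zf -/(pt k) !powsplit // !exprMn; ring.
have -> : syndrome_matrix e b alpha beta f1 m1 f2 m2 delta nu #|E| =
   \matrix_(r < nu.+1 * (delta.-1 - 2 * #|E|), v < 2 * #|E|)
     \sum_(k < 2 * #|E|) c 0 k * g 0 k ^+ (r %% (delta.-1 - 2 * #|E|) + v)
        * z 0 k ^+ (r %/ (delta.-1 - 2 * #|E|)).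
  by apply/matrixP => i v; rewrite !mxE key.
apply: roos_rank.
- move=> k k'; rewrite !mxE /zf => hz.
  apply: pt_inj; have := inj2 pa pb co (ltn_ord _) (ltn_ord _) (ltn_ord _) (ltn_ord _) hz.
  by case=> h1 h2'; apply: pair_eq.
- move=> k k'; rewrite !mxE /gf => hz.
  apply: pt_inj.
  have := inj2 (primz pa cm1) (primz pb cm2) co (ltn_ord _) (ltn_ord _) (ltn_ord _) (ltn_ord _) hz.
  by case=> h1 h2'; apply: pair_eq.
- move=> k; rewrite !mxE /cf.
  have := ptQ k; case: (pt k) => x1 x2; rewrite in_setX inE => /andP[h1 h2'].
  rewrite hE in h1.
  rewrite !mulf_neq0 ?expf_neq0 ?expfz_neq0 // scaler_eq0 negb_or ?oner_eq0 ?andbT //.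
- by move: h2; lia.
- by move: h2 h4; lia.
Qed.
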